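(* For $n\in\mathbb N$, let $\sigma$ be the measure on $L_n$ given by $\sigma(j)=\sin\big(\frac{j\pi}{n+1}\big)$, $1\le j\le n$. Then $C^0_\sigma=1+2\cos\big(\frac{\pi}{n+1}\big)$.
   Context: $L_n$ is the path graph with vertices $\{1,\dots,n\}$ and edges $\{j,j+1\}$, with distance $|i-j|$. For a weight function $\mu:\{1,\dots,n\}\to(0,\infty)$, $\mu(A)=\sum_{v\in A}\mu(v)$, $B(x,r)=\{y:|x-y|\le r\}$ and $C^0_\mu=\max_{1\le x\le n}\mu(B(x,1))/\mu(x)$. *)

(* Defs.v *)
From Stdlib Require Import Reals List Arith Lia Lra.
Import ListNotations.
Open Scope R_scope.

Definition vertices (n : nat) : list nat := seq 1 n.

Definition pdist (i j : nat) : nat := if (i <=? j)%nat then (j - i)%nat else (i - j)%nat.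

Definition ball (n x r : nat) : list nat :=
  filter (fun y => (pdist x y <=? r)%nat) (vertices n).

(* mu(A) = sum_{v in A} mu(v) for A a (duplicate-free) list of vertices. *)
Definition meas (mu : nat -> R) (A : list nat) : R :=
  fold_right (fun v acc => mu v + acc) 0 A.

Definition list_max (l : list R) : R :=
  match l with
  | [] => 0
  | a :: t => fold_right Rmax a t
  end.

Definition C0 (n : nat) (mu : nat -> R) : R :=
  list_max (map (fun x => meas mu (ball n x 1) / mu x) (vertices n)).

Definition sigma_meas (n : nat) : nat -> R :=
  fun j => sin (INR j * PI / INR (n + 1)).

(* Main.v *)
Require Import Defs.
From Stdlib Require Import Reals List Arith Lia Lra.
Import ListNotations.
Open Scope R_scope.

Lemma filter_none (f : nat -> bool) (l : list nat) :
  (forall y, In y l -> f y = false) -> filter f l = [].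
Proof.
  induction l as [|a l IH]; intros H; simpl; auto.
  rewrite (H a (or_introl eq_refl)). apply IH. intros; apply H; simpl; auto.
Qed.

Lemma meas_app mu l1 l2 : meas mu (l1 ++ l2) = meas mu l1 + meas mu l2.
Proof. induction l1; simpl; [lra|]. rewrite IHl1; lra. Qed.

Lemma left_part mu x : (1 <= x)%nat -> mu 0%nat = 0 ->
  meas mu (filter (fun y => (pdist x y <=? 1)%nat) (seq 1 (x - 1))) = mu (x - 1)%nat.
Proof.
  intros Hx H0. destruct (Nat.eq_dec x 1) as [->|Hne].
  - simpl. rewrite H0. reflexivity.
  - replace (x - 1)%nat with (S (x - 2)) by lia.
    rewrite seq_S, filter_app.
    rewrite filter_none.
    + assert (Hp: (pdist x (S (x-2)) <=? 1)%nat = true).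
      { unfold pdist; destruct (x <=? S (x-2))%nat eqn:E; apply Nat.leb_le;
        [apply Nat.leb_le in E | apply Nat.leb_gt in E]; lia. }
      replace (1 + (x-2))%nat with (S (x - 2)) by lia.
      cbn [filter app]. rewrite Hp. simpl. lra.
    + intros y Hy. apply in_seq in Hy. unfold pdist.
      destruct (x <=? y)%nat eqn:E; apply Nat.leb_gt; [apply Nat.leb_le in E|]; lia.
Qed.

Lemma right_part mu n x : (x <= n)%nat -> mu (S n) = 0 ->
  meas mu (filter (fun y => (pdist x y <=? 1)%nat) (seq (S x) (n - x))) = mu (S x).
Proof.
  intros Hx H0. destruct (Nat.eq_dec x n) as [->|Hne].
  - rewrite Nat.sub_diag. simpl. rewrite H0. reflexivity.
  - replace (n - x)%nat with (S (n - x - 1)) by lia.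
    assert (Hp: (pdist x (S x) <=? 1)%nat = true).
    { unfold pdist; destruct (x <=? S x)%nat eqn:E; apply Nat.leb_le;
      [apply Nat.leb_le in E | apply Nat.leb_gt in E]; lia. }
    cbn [seq filter]. rewrite Hp. simpl.
    rewrite filter_none; [simpl; lra|].
    intros y Hy. apply in_seq in Hy. unfold pdist.
    destruct (x <=? y)%nat eqn:E1; apply Nat.leb_gt; [apply Nat.leb_le in E1|apply Nat.leb_gt in E1]; lia.
Qed.

Lemma ball_meas mu n x : (1 <= x <= n)%nat -> mu 0%nat = 0 -> mu (S n) = 0 ->
  meas mu (ball n x 1) = mu (x - 1)%nat + mu x + mu (S x).
Proof.
  intros Hx H0 H1. unfold ball, vertices.
  replace (seq 1 n) with (seq 1 (x - 1) ++ x :: seq (S x) (n - x)).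
  2:{ replace (x :: seq (S x) (n - x)) with (seq (1 + (x-1)) (S (n-x)))
        by (replace (1+(x-1))%nat with x by lia; reflexivity).
      rewrite <- seq_app. f_equal. lia. }
  rewrite filter_app, meas_app, left_part by lia || auto.
  assert (Hp: (pdist x x <=? 1)%nat = true).
  { unfold pdist. rewrite Nat.leb_refl, Nat.sub_diag. reflexivity. }
  cbn [filter]. rewrite Hp. simpl.
  rewrite right_part by lia || auto. lra.
Qed.

Lemma list_max_const (c : R) (l : list nat) (f : nat -> R) :
  l <> [] -> (forall x, In x l -> f x = c) -> Defs.list_max (map f l) = c.
Proof.
  destruct l as [|a l]; [congruence|]. intros _ H. simpl.
  rewrite (H a (or_introl eq_refl)).
  assert (H' : forall x, In x l -> f x = c) by (intros; apply H; simpl; auto).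
  clear H. induction l as [|b l IHl]; simpl; auto.
  rewrite IHl by (intros; apply H'; simpl; auto). rewrite (H' b (or_introl eq_refl)).
  apply Rmax_left; lra.
Qed.

Theorem lemma3p3 (n : nat) (hn : (1 <= n)%nat) :
  C0 n (sigma_meas n) = 1 + 2 * cos (PI / INR (n + 1)).
Proof.
  unfold C0. apply list_max_const.
  { unfold vertices. destruct n; [lia|]. simpl; congruence. }
  intros x Hx. unfold vertices in Hx. apply in_seq in Hx.
  assert (Hpos : 0 < INR (n + 1)) by (apply lt_0_INR; lia).
  rewrite ball_meas; try lia.
  2:{ unfold sigma_meas. simpl INR. replace (0 * PI / INR (n + 1)) with 0 by (field; lra). apply sin_0. }
  2:{ unfold sigma_meas. replace (INR (S n) * PI / INR (n + 1)) with PI. apply sin_PI.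
      rewrite <- Nat.add_1_r. field; lra. }
  unfold sigma_meas.
  set (h := PI / INR (n + 1)).
  assert (E1 : INR (x - 1) * PI / INR (n + 1) = INR x * h - h).
  { rewrite minus_INR by lia. simpl. unfold h. field; lra. }
  assert (E2 : INR (S x) * PI / INR (n + 1) = INR x * h + h).
  { rewrite S_INR. unfold h. field; lra. }
  assert (E3 : INR x * PI / INR (n + 1) = INR x * h) by (unfold h; field; lra).
  rewrite E1, E2, E3, sin_minus, sin_plus.
  assert (Hs : 0 < sin (INR x * h)).
  { apply sin_gt_0.
    - unfold h. apply Rmult_lt_0_compat. apply lt_0_INR; lia.
      apply Rdiv_lt_0_compat; [apply PI_RGT_0|lra].
    - unfold h. assert (INR x < INR (n+1)) by (apply lt_INR; lia).
      replace (INR x * (PI / INR (n + 1))) with (PI * (INR x / INR (n+1))) by (field; lra).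
      rewrite <- (Rmult_1_r PI) at 2. apply Rmult_lt_compat_l; [apply PI_RGT_0|].
      apply Rmult_lt_reg_r with (INR (n+1)); [lra|]. field_simplify; lra. }
  field. lra.
Qed.
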